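(* Let $N\ge1$ and let $\Omega_P,\Omega_S\subset[0,\pi]$ be disjoint nonempty closed sets, each a finite union of closed intervals of positive length. Let $D(\omega)=1$ on $\Omega_P$ and $D(\omega)=0$ on $\Omega_S$. For $K>0$ let $W_K(\omega)=1$ on $\Omega_P$ and $W_K(\omega)=K$ on $\Omega_S$, and define $$\Delta_{P,res}(K)=\min_{c_0,\dots,c_N\in\mathbb{R}}\ \max_{\omega\in\Omega_P\cup\Omega_S}\Bigl|W_K(\omega)\Bigl(\sum_{n=0}^N c_n\cos(n\omega)-D(\omega)\Bigr)\Bigr|,$$ the minimax weighted error of the optimal even-symmetric (zero-phase) sequence of order $2N$ approximating $D$ with weight $W_K$. Then $\Delta_{P,res}$ is a strictly increasing function of $K$ on $(0,\infty)$: if $0<K_1<K_2$ then $\Delta_{P,res}(K_1)<\Delta_{P,res}(K_2)$. *)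

(* Defs.v *)
From Stdlib Require Import Reals List ClassicalEpsilon.
Open Scope R_scope.

(* A band is a finite union of closed intervals [a,b], given as a list of pairs. *)
Definition inBand (L : list (R * R)) (w : R) : Prop :=
  exists p, In p L /\ fst p <= w <= snd p.

Definition valid_band (L : list (R * R)) : Prop :=
  L <> nil /\ forall p, In p L -> 0 <= fst p /\ fst p < snd p /\ snd p <= PI.

Definition resp (N : nat) (c : nat -> R) (w : R) : R :=
  sum_f_R0 (fun n => c n * cos (INR n * w)) N.

Definition Dd (LP : list (R*R)) (w : R) : R :=
  if excluded_middle_informative (inBand LP w) then 1 else 0.
Definition WK (LP : list (R*R)) (K w : R) : R :=
  if excluded_middle_informative (inBand LP w) then 1 else K.

Definition werr (N : nat) (LP : list (R*R)) (K : R) (c : nat -> R) (w : R) : R :=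
  Rabs (WK LP K w * (resp N c w - Dd LP w)).

Definition is_max_err (N : nat) (LP LS : list (R*R)) (K : R) (c : nat -> R) (e : R) : Prop :=
  (exists w, (inBand LP w \/ inBand LS w) /\ werr N LP K c w = e) /\
  (forall w, inBand LP w \/ inBand LS w -> werr N LP K c w <= e).

Definition is_Delta (N : nat) (LP LS : list (R*R)) (K : R) (d : R) : Prop :=
  (exists c, is_max_err N LP LS K c d) /\
  (forall c e, is_max_err N LP LS K c e -> d <= e).

(* Main.v *)
Require Import Defs.
From Stdlib Require Import Reals List ClassicalEpsilon Lra Lia Psatz.
From Coquelicot Require Import Coquelicot.
Open Scope R_scope.

Definition sresp (N : nat) (c : nat -> R) (w : R) : R :=
  sum_f_R0 (fun n => - (c n * INR n) * sin (INR n * w)) N.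

Lemma resp_S N c w : resp (S N) c w = resp N c w + c (S N) * cos (INR (S N) * w).
Proof. reflexivity. Qed.
Lemma sresp_S N c w : sresp (S N) c w = sresp N c w + - (c (S N) * INR (S N)) * sin (INR (S N) * w).
Proof. reflexivity. Qed.

Lemma resp_lin N a b x y w :
  resp N (fun n => a * x n + b * y n) w = a * resp N x w + b * resp N y w.
Proof. induction N. unfold resp; simpl; ring. rewrite !resp_S, IHN; ring. Qed.

Lemma resp_scale N a x w : resp N (fun n => a * x n) w = a * resp N x w.
Proof. induction N. unfold resp; simpl; ring. rewrite !resp_S, IHN; ring. Qed.

Lemma resp_delta N w : resp N (fun n => if Nat.eq_dec n 0 then 1 else 0) w = 1.
Proof. induction N. unfold resp; simpl. rewrite Rmult_0_l, cos_0; ring.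
  rewrite resp_S, IHN. destruct (Nat.eq_dec (S N) 0); [lia|ring]. Qed.

Lemma resp_zero N c w : (forall n, (n <= N)%nat -> c n = 0) -> resp N c w = 0.
Proof. induction N; intros H. unfold resp; simpl; rewrite H; [ring|lia].
  rewrite resp_S, IHN, H; [ring|lia|intros; apply H; lia]. Qed.

Lemma sresp_zero N c w : (forall n, (n <= N)%nat -> c n = 0) -> sresp N c w = 0.
Proof. induction N; intros H. unfold sresp; simpl; rewrite H; [ring|lia].
  rewrite sresp_S, IHN, H; [ring|lia|intros; apply H; lia]. Qed.

Lemma resp_derive N c w : is_derive (resp N c) w (sresp N c w).
Proof.
  induction N.
  - unfold resp, sresp; simpl. auto_derive; auto. ring.
  - apply (is_derive_ext (fun w => resp N c w + c (S N) * cos (INR (S N) * w))).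
    { intros; reflexivity. }
    rewrite sresp_S. apply @is_derive_plus; auto. set (k := INR (S N)). auto_derive; auto. ring.
Qed.

Lemma sresp_derive N c w : is_derive (sresp N c) w (resp N (fun n => - (INR n)^2 * c n) w).
Proof.
  induction N.
  - unfold resp, sresp; simpl. auto_derive; auto. ring.
  - apply (is_derive_ext (fun w => sresp N c w + - (c (S N) * INR (S N)) * sin (INR (S N) * w))).
    { intros; reflexivity. }
    rewrite resp_S. apply @is_derive_plus; auto. set (k := INR (S N)). auto_derive; auto. ring.
Qed.

Lemma resp_cont N c w : continuity_pt (resp N c) w.
Proof.
  apply continuity_pt_filterlim. apply (@ex_derive_continuous R_AbsRing R_NormedModule).
  eexists. apply resp_derive.
Qed.

Lemma Rabs_le_inv a b : Rabs a <= b -> -b <= a <= b.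
Proof. intros H. pose proof (Rle_abs a). pose proof (Rle_abs (-a)). rewrite Rabs_Ropp in H1. lra. Qed.


Fixpoint sabs (n:nat) (c c' : nat -> R) : R :=
  match n with O => 0 | S k => sabs k c c' + Rabs (c k - c' k) end.
Definition inbox n (lo hi : nat -> R) (c : nat -> R) :=
  forall i, (i < n)%nat -> lo i <= c i <= hi i.
Definition upd (c : nat -> R) n t : nat -> R :=
  fun i => if Nat.eq_dec i n then t else c i.

Lemma sabs_ext n c c' d d' : (forall i, (i<n)%nat -> c i = d i /\ c' i = d' i) ->
  sabs n c c' = sabs n d d'.
Proof.
  induction n; simpl; intros H; auto.
  rewrite IHn by (intros; apply H; lia). destruct (H n) as [-> ->]; lia || auto.
Qed.

Lemma sabs_nonneg n c c' : 0 <= sabs n c c'.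
Proof. induction n; simpl; [lra|]. pose proof (Rabs_pos (c n - c' n)); lra. Qed.

Lemma sabs_same n c : sabs n c c = 0.
Proof. induction n; simpl; auto. rewrite IHn, Rminus_diag, Rabs_R0; lra. Qed.

Lemma lip_eq (f : (nat->R)->R) n L c c' :
  (forall c c', Rabs (f c - f c') <= L * sabs n c c') -> sabs n c c' = 0 -> f c = f c'.
Proof.
  intros H E. specialize (H c c'). rewrite E, Rmult_0_r in H.
  pose proof (Rabs_pos (f c - f c')). assert (Rabs (f c - f c') = 0) by lra.
  destruct (Rcase_abs (f c - f c')); [rewrite Rabs_left in H1 by lra|rewrite Rabs_right in H1 by lra]; lra.
Qed.

Lemma lip_cont (h:R->R) L : 0<=L -> (forall x y, Rabs(h x - h y) <= L*Rabs(x-y)) ->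
  forall x, continuity_pt h x.
Proof.
  intros HL H x eps Heps. exists (eps/(L+1)). split.
  { apply Rdiv_lt_0_compat; lra. }
  intros y [_ Hy]. simpl in *. unfold R_dist in *.
  eapply Rle_lt_trans. apply H.
  apply Rle_lt_trans with ((L+1) * Rabs (y-x)).
  { pose proof (Rabs_pos (y-x)); nra. }
  apply Rmult_lt_reg_r with (/(L+1)). apply Rinv_0_lt_compat; lra.
  replace ((L + 1) * Rabs (y - x) * / (L + 1)) with (Rabs (y-x)) by (field; lra).
  exact Hy.
Qed.

Lemma box_min : forall n (f : (nat->R)->R) L lo hi, 0 <= L ->
  (forall i, lo i <= hi i) ->
  (forall c c', Rabs (f c - f c') <= L * sabs n c c') ->
  exists cs, inbox n lo hi cs /\ forall c, inbox n lo hi c -> f cs <= f c.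
Proof.
  induction n; intros f L lo hi HL Hlh Hf.
  - exists lo. split. intros i Hi; lia.
    intros c _. right. apply (lip_eq f 0 L); auto.
  - set (ft := fun t c => f (upd c n t)).
    assert (Hft : forall t c c', Rabs (ft t c - ft t c') <= L * sabs n c c').
    { intros t c c'. unfold ft. eapply Rle_trans. apply Hf. simpl.
      assert (E: upd c n t n - upd c' n t n = 0) by
        (unfold upd; destruct (Nat.eq_dec n n) as [_|]; [lra|lia]).
      rewrite E, Rabs_R0, Rplus_0_r.
      right. f_equal. apply sabs_ext. intros i Hi. unfold upd.
      destruct (Nat.eq_dec i n); [lia|]. auto. }
    set (P := fun t v => (exists c, inbox n lo hi c /\ ft t c = v) /\
                         forall c, inbox n lo hi c -> v <= ft t c).
    set (h := fun t => epsilon (inhabits 0) (P t)).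
    assert (hspec : forall t, P t (h t)).
    { intros t. unfold h. apply epsilon_spec.
      destruct (IHn (ft t) L lo hi HL Hlh (Hft t)) as [cs [H1 H2]].
      exists (ft t cs). split; eauto. }
    assert (Hh : forall x y, Rabs (h x - h y) <= L * Rabs (x - y)).
    { assert (K : forall x y, h x <= h y + L * Rabs (x - y)).
      { intros x y. destruct (hspec y) as [[cy [Hb Hy]] _].
        destruct (hspec x) as [_ Hx]. eapply Rle_trans. apply Hx. exact Hb.
        rewrite <- Hy. unfold ft.
        pose proof (Hf (upd cy n x) (upd cy n y)) as Hl. simpl in Hl.
        assert (E: upd cy n x n - upd cy n y n = x - y) by
          (unfold upd; destruct (Nat.eq_dec n n) as [_|]; [lra|lia]).
        rewrite E in Hl.
        rewrite (sabs_ext n (upd cy n x) (upd cy n y) cy cy) in Hl.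
        rewrite sabs_same, Rplus_0_l in Hl. apply Rabs_le_inv in Hl; lra.
        intros i Hi; unfold upd; destruct (Nat.eq_dec i n); [lia|auto]. }
      intros x y. apply Rabs_le. pose proof (K x y). pose proof (K y x).
      rewrite Rabs_minus_sym in H0. lra. }
    destruct (continuity_ab_min h (lo n) (hi n) (Hlh n)) as [ts [Hts Hin]].
    { intros; eapply lip_cont; eauto. }
    destruct (hspec ts) as [[c0 [Hb0 E0]] _].
    exists (upd c0 n ts). split.
    + intros i Hi. unfold upd. destruct (Nat.eq_dec i n). subst; auto. apply Hb0; lia.
    + intros c Hc. change (f (upd c0 n ts)) with (ft ts c0). rewrite E0.
      assert (Ec : f c = ft (c n) c).
      { unfold ft. apply (lip_eq f (S n) L); auto. rewrite <- (sabs_same (S n) c).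
        apply sabs_ext. intros i Hi; unfold upd; destruct (Nat.eq_dec i n); subst; auto. }
      rewrite Ec. eapply Rle_trans. apply Hts. apply Hc; lia.
      destruct (hspec (c n)) as [_ H2]. apply H2. intros i Hi; apply Hc; lia.
Qed.
Lemma deriv_zero_on (f : R->R) a b l w : a < w < b -> (forall y, a<y<b -> f y = 0) ->
  is_derive f w l -> l = 0.
Proof.
  intros Hw Hf Hd.
  assert (Hd' : is_derive (fun _ : R => 0) w l).
  { apply (is_derive_ext_loc f). apply (locally_interval _ w a b); simpl; try lra.
    intros y H1 H2; apply Hf; simpl in *; lra. exact Hd. }
  apply is_derive_unique in Hd'. rewrite Derive_const in Hd'. auto.
Qed.

Lemma indep : forall N c a b, a < b -> (forall w, a<w<b -> resp N c w = 0) ->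
  forall n, (n<=N)%nat -> c n = 0.
Proof.
  induction N; intros c a b Hab H n Hn.
  - assert (n = 0%nat) by lia; subst. specialize (H ((a+b)/2) ltac:(lra)).
    unfold resp in H; simpl in H. rewrite Rmult_0_l, cos_0 in H. lra.
  - assert (H1 : forall w, a<w<b -> sresp (S N) c w = 0).
    { intros w Hw. eapply deriv_zero_on; [exact Hw|exact H|apply resp_derive]. }
    assert (H2 : forall w, a<w<b -> resp (S N) (fun n => - (INR n)^2 * c n) w = 0).
    { intros w Hw. eapply deriv_zero_on; [exact Hw|exact H1|apply sresp_derive]. }
    set (k := INR (S N)).
    assert (Hk : 0 < k) by (apply lt_0_INR; lia).
    set (c' := fun n => k^2 * c n + 1 * (- (INR n)^2 * c n)).
    assert (H3 : forall w, a<w<b -> resp N c' w = 0).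
    { intros w Hw. assert (E := resp_lin (S N) (k^2) 1 c (fun n => - (INR n)^2 * c n) w).
      rewrite H, H2 in E by auto. rewrite resp_S in E. fold c' in E.
      replace (k ^ 2 * c (S N) + 1 * (- INR (S N) ^ 2 * c (S N))) with 0 in E
        by (fold k; ring). lra. }
    assert (Hlow : forall m, (m <= N)%nat -> c m = 0).
    { intros m Hm. specialize (IHN c' a b Hab H3 m Hm). unfold c' in IHN.
      assert (INR m < k) by (apply lt_INR; lia).
      pose proof (pos_INR m).
      assert (E: (k^2 - INR m^2) * c m = 0) by (rewrite <- IHN; ring).
      apply Rmult_integral in E. destruct E as [E|E]; auto. nra. }
    destruct (Nat.eq_dec n (S N)) as [Heq|Hl]; [subst n|apply Hlow; lia].
    set (w := (a+b)/2).
    specialize (H w ltac:(unfold w; lra)). specialize (H1 w ltac:(unfold w; lra)).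
    rewrite resp_S, resp_zero in H by auto. rewrite sresp_S, sresp_zero in H1 by auto.
    fold k in H, H1. pose proof (sin2_cos2 (k*w)). unfold Rsqr in H0.
    assert (c (S N) * cos (k*w) = 0) by lra.
    assert (c (S N) * sin (k*w) = 0) by nra.
    nra.
Qed.
Lemma cont_lin (g : R -> R) a b w : (forall w, continuity_pt g w) ->
  continuity_pt (fun w => Rabs (a * g w + b)) w.
Proof.
  intros H. change (continuity_pt (comp Rabs (plus_fct (mult_real_fct a g) (fct_cte b))) w).
  apply continuity_pt_comp. apply continuity_pt_plus. apply continuity_pt_scal; auto.
  apply continuity_pt_const. intros x y; reflexivity. apply Rcontinuity_abs.
Qed.

Definition ismax (S : R -> Prop) (g : R -> R) (v : R) : Prop :=
  (exists w, S w /\ g w = v) /\ (forall w, S w -> g w <= v).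

Lemma ismax_uniq S g v v' : ismax S g v -> ismax S g v' -> v = v'.
Proof.
  intros [[w [Hw E]] H] [[w' [Hw' E']] H']. apply H' in Hw. apply H in Hw'. lra.
Qed.

Lemma max_lip (S : R -> Prop) (F : (nat->R) -> R -> R) n L (M : (nat->R) -> R) :
  (forall c, ismax S (F c) (M c)) ->
  (forall c c' w, S w -> Rabs (F c w - F c' w) <= L * sabs n c c') ->
  forall c c', Rabs (M c - M c') <= L * sabs n c c'.
Proof.
  intros HM HF.
  assert (K : forall c c', M c <= M c' + L * sabs n c c').
  { intros c c'. destruct (HM c) as [[w [Hw E]] _]. destruct (HM c') as [_ H'].
    rewrite <- E. specialize (H' w Hw). specialize (HF c c' w Hw).
    apply Rabs_le_inv in HF. lra. }
  intros c c'. apply Rabs_le. pose proof (K c c'). pose proof (K c' c).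
  assert (sabs n c' c = sabs n c c').
  { clear. induction n; simpl; auto. rewrite IHn, Rabs_minus_sym. auto. }
  rewrite H1 in H0. lra.
Qed.

Lemma inBand_cons p L w : inBand (p :: L) w <-> (fst p <= w <= snd p) \/ inBand L w.
Proof.
  unfold inBand; split.
  - intros [q [[<-|Hq] Hw]]; [left; auto|right; eauto].
  - intros [Hw|[q [Hq Hw]]]; [exists p; simpl; auto|exists q; simpl; auto].
Qed.

Lemma band_max L h : L <> nil -> (forall p, In p L -> fst p <= snd p) ->
  (forall w, continuity_pt h w) ->
  exists w0, inBand L w0 /\ forall w, inBand L w -> h w <= h w0.
Proof.
  induction L as [|p L IH]; intros Hn Hv Hc; [congruence|].
  destruct (continuity_ab_maj h (fst p) (snd p)) as [Mx [HM HMx]].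
  { apply Hv; simpl; auto. } { intros; auto. }
  destruct L as [|q L'].
  - exists Mx. split. apply inBand_cons; auto.
    intros w Hw. apply inBand_cons in Hw. destruct Hw as [Hw|[q [[] _]]]. auto.
  - destruct IH as [w1 [Hw1 H1]]; [congruence| intros; apply Hv; simpl; auto | auto|].
    destruct (Rle_dec (h Mx) (h w1)).
    + exists w1. split. apply inBand_cons; auto.
      intros w Hw. apply inBand_cons in Hw. destruct Hw as [Hw|Hw].
      specialize (HM w Hw); lra. auto.
    + exists Mx. split. apply inBand_cons; auto.
      intros w Hw. apply inBand_cons in Hw. destruct Hw as [Hw|Hw]. auto.
      specialize (H1 w Hw); lra.
Qed.

Lemma werr_P N LP K c w : inBand LP w -> werr N LP K c w = Rabs (1 * resp N c w + -1).
Proof.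
  intros H. unfold werr, WK, Dd. destruct (excluded_middle_informative (inBand LP w)); [|tauto].
  f_equal; ring.
Qed.

Lemma werr_nP N LP K c w : ~ inBand LP w -> werr N LP K c w = Rabs (K * resp N c w + 0).
Proof.
  intros H. unfold werr, WK, Dd. destruct (excluded_middle_informative (inBand LP w)); [tauto|].
  f_equal; ring.
Qed.

Definition band LP LS := fun w => inBand LP w \/ inBand LS w.

Lemma valid_le L : valid_band L -> forall p, In p L -> fst p <= snd p.
Proof. intros [_ H] p Hp. destruct (H p Hp); lra. Qed.

Lemma max_exists N LP LS K c : valid_band LP -> valid_band LS ->
  (forall w, inBand LP w -> ~ inBand LS w) ->
  exists e, ismax (band LP LS) (werr N LP K c) e.
Proof.
  intros HP HS Hd.
  destruct (band_max LP (fun w => Rabs (1 * resp N c w + -1))) as [wP [HwP HP']].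
  { apply HP. } { apply valid_le; auto. } { intros; apply cont_lin, resp_cont. }
  destruct (band_max LS (fun w => Rabs (K * resp N c w + 0))) as [wS [HwS HS']].
  { apply HS. } { apply valid_le; auto. } { intros; apply cont_lin, resp_cont. }
  assert (HnS : ~ inBand LP wS) by (intro X; exact (Hd wS X HwS)).
  destruct (Rle_dec (Rabs (1 * resp N c wP + -1)) (Rabs (K * resp N c wS + 0))).
  - exists (werr N LP K c wS). split. exists wS; split; [right; auto|auto].
    intros w [Hw|Hw].
    + rewrite (werr_P _ _ _ _ w), (werr_nP _ _ _ _ wS) by auto. specialize (HP' w Hw). lra.
    + assert (~ inBand LP w) by (intro X; exact (Hd w X Hw)).
      rewrite !werr_nP by auto. auto.
  - exists (werr N LP K c wP). split. exists wP; split; [left; auto|auto].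
    intros w [Hw|Hw].
    + rewrite !werr_P by auto. auto.
    + assert (~ inBand LP w) by (intro X; exact (Hd w X Hw)).
      rewrite (werr_P _ _ _ _ wP), (werr_nP _ _ _ _ w) by auto. specialize (HS' w Hw). lra.
Qed.

Definition Emax N LP LS K c := epsilon (inhabits 0) (ismax (band LP LS) (werr N LP K c)).

Lemma resp_diff N c c' w : Rabs (resp N c w - resp N c' w) <= sabs (S N) c c'.
Proof.
  induction N.
  - unfold resp; simpl. replace (c 0%nat * cos (0 * w) - c' 0%nat * cos (0 * w))
      with ((c 0%nat - c' 0%nat) * cos (0*w)) by ring.
    rewrite Rabs_mult. pose proof (COS_bound (0*w)). pose proof (Rabs_pos (c 0%nat - c' 0%nat)).
    assert (Rabs (cos (0*w)) <= 1) by (apply Rabs_le; lra). nra.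
  - rewrite !resp_S. change (sabs (S (S N)) c c') with (sabs (S N) c c' + Rabs (c (S N) - c' (S N))).
    replace (resp N c w + c (S N) * cos (INR (S N) * w) - (resp N c' w + c' (S N) * cos (INR (S N) * w)))
      with ((resp N c w - resp N c' w) + (c (S N) - c' (S N)) * cos (INR (S N) * w)) by ring.
    eapply Rle_trans. apply Rabs_triang. rewrite Rabs_mult.
    pose proof (COS_bound (INR (S N) * w)). pose proof (Rabs_pos (c (S N) - c' (S N))).
    assert (Rabs (cos (INR (S N) * w)) <= 1) by (apply Rabs_le; lra). nra.
Qed.

Lemma werr_lip N LP K c c' w :
  Rabs (werr N LP K c w - werr N LP K c' w) <= (1 + Rabs K) * sabs (S N) c c'.
Proof.
  unfold werr. set (W := WK LP K w). set (D := Dd LP w).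
  assert (HW : Rabs W <= 1 + Rabs K).
  { unfold W, WK. destruct (excluded_middle_informative _); rewrite ?Rabs_R1;
    pose proof (Rabs_pos K); lra. }
  assert (E : W * (resp N c w - D) - W * (resp N c' w - D) = W * (resp N c w - resp N c' w)) by ring.
  pose proof (resp_diff N c c' w). pose proof (Rabs_pos (resp N c w - resp N c' w)).
  pose proof (Rabs_pos W).
  assert (Hb : Rabs W * Rabs (resp N c w - resp N c' w) <= (1 + Rabs K) * sabs (S N) c c')
    by (apply Rmult_le_compat; auto).
  apply Rabs_le. split.
  - pose proof (Rabs_triang_inv (W * (resp N c' w - D)) (W * (resp N c w - D))).
    rewrite Rabs_minus_sym, E, (Rabs_mult W (resp N c w - resp N c' w)) in H2. lra.
  - pose proof (Rabs_triang_inv (W * (resp N c w - D)) (W * (resp N c' w - D))).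
    rewrite E, (Rabs_mult W (resp N c w - resp N c' w)) in H2. lra.
Qed.

Definition Gm N a b c := epsilon (inhabits 0)
  (ismax (fun w => a <= w <= b) (fun w => Rabs (1 * resp N c w + 0))).

Lemma G_spec N a b c : a <= b ->
  ismax (fun w => a <= w <= b) (fun w => Rabs (1 * resp N c w + 0)) (Gm N a b c).
Proof.
  intros Hab. unfold Gm. apply epsilon_spec.
  destruct (continuity_ab_maj (fun w => Rabs (1 * resp N c w + 0)) a b Hab) as [Mx [H1 H2]].
  { intros; apply cont_lin, resp_cont. }
  eexists. split. exists Mx. split; eauto. auto.
Qed.

Lemma G_lip N a b : a <= b -> forall c c',
  Rabs (Gm N a b c - Gm N a b c') <= 1 * sabs (S N) c c'.
Proof.
  intros Hab. apply (max_lip (fun w => a <= w <= b) (fun c w => Rabs (1 * resp N c w + 0))).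
  { intros; apply G_spec; auto. }
  intros c c' w _. rewrite Rmult_1_l. pose proof (resp_diff N c c' w).
  rewrite !Rmult_1_l, !Rplus_0_r.
  apply Rabs_le. pose proof (Rabs_triang_inv (resp N c w) (resp N c' w)).
  pose proof (Rabs_triang_inv (resp N c' w) (resp N c w)).
  rewrite Rabs_minus_sym in H1. lra.
Qed.

Definition flo j s : nat -> R := fun i => if Nat.eq_dec i j then s else -1.
Definition fhi j s : nat -> R := fun i => if Nat.eq_dec i j then s else 1.

Lemma face_pos N a b j s : a < b -> (j <= N)%nat -> (s = 1 \/ s = -1) ->
  exists m, 0 < m /\ forall c, inbox (S N) (flo j s) (fhi j s) c -> m <= Gm N a b c.
Proof.
  intros Hab Hj Hs.
  destruct (box_min (S N) (Gm N a b) 1 (flo j s) (fhi j s)) as [u [Hu Hmin]].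
  { lra. } { intros i; unfold flo, fhi; destruct (Nat.eq_dec i j); lra. }
  { apply G_lip; lra. }
  exists (Gm N a b u). split; auto.
  destruct (Rlt_le_dec 0 (Gm N a b u)) as [|Hle]; auto. exfalso.
  destruct (G_spec N a b u ltac:(lra)) as [_ Hg].
  assert (Hz : forall w, a < w < b -> resp N u w = 0).
  { intros w Hw. specialize (Hg w ltac:(lra)). simpl in Hg.
    rewrite Rmult_1_l, Rplus_0_r in Hg. pose proof (Rabs_pos (resp N u w)).
    assert (Rabs (resp N u w) = 0) by lra.
    destruct (Rcase_abs (resp N u w)); [rewrite Rabs_left in H0 by lra|rewrite Rabs_right in H0 by lra]; lra. }
  pose proof (indep N u a b Hab Hz j Hj). specialize (Hu j ltac:(lia)).
  unfold flo, fhi in Hu. destruct (Nat.eq_dec j j); [|lia]. lra.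
Qed.

Lemma faces_pos N a b : a < b -> forall k, (k <= S N)%nat ->
  exists m, 0 < m /\ forall j s c, (j < k)%nat -> (s = 1 \/ s = -1) ->
    inbox (S N) (flo j s) (fhi j s) c -> m <= Gm N a b c.
Proof.
  intros Hab. induction k; intros Hk.
  - exists 1. split. lra. intros; lia.
  - destruct IHk as [m1 [Hm1 H1]]; [lia|].
    destruct (face_pos N a b k 1 Hab ltac:(lia) ltac:(auto)) as [m2 [Hm2 H2]].
    destruct (face_pos N a b k (-1) Hab ltac:(lia) ltac:(auto)) as [m3 [Hm3 H3]].
    exists (Rmin m1 (Rmin m2 m3)). split.
    { apply Rmin_pos; auto. apply Rmin_pos; auto. }
    intros j s c Hj Hs Hc.
    pose proof (Rmin_l m1 (Rmin m2 m3)). pose proof (Rmin_r m1 (Rmin m2 m3)).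
    pose proof (Rmin_l m2 m3). pose proof (Rmin_r m2 m3).
    destruct (Nat.eq_dec j k).
    + subst j. destruct Hs; subst s.
      * specialize (H2 c Hc). lra.
      * specialize (H3 c Hc). lra.
    + specialize (H1 j s c ltac:(lia) Hs Hc). lra.
Qed.

Lemma argmax (c : nat -> R) n : exists j, (j <= n)%nat /\ forall i, (i <= n)%nat -> Rabs (c i) <= Rabs (c j).
Proof.
  induction n.
  - exists 0%nat. split; auto. intros i Hi. assert (i = 0%nat) by lia; subst; lra.
  - destruct IHn as [j [Hj H]]. destruct (Rle_dec (Rabs (c (S n))) (Rabs (c j))).
    + exists j. split. lia. intros i Hi. destruct (Nat.eq_dec i (S n)). subst; auto. apply H; lia.
    + exists (S n). split. lia. intros i Hi. destruct (Nat.eq_dec i (S n)). subst; lra.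
      specialize (H i ltac:(lia)). lra.
Qed.

Lemma resp_ext N c d w : (forall n, (n <= N)%nat -> c n = d n) -> resp N c w = resp N d w.
Proof.
  induction N; intros H. unfold resp; simpl; rewrite H; auto.
  rewrite !resp_S, IHN, H; auto.
Qed.

Lemma coercive N a b : a < b -> exists m, 0 < m /\ forall c j, (j <= N)%nat ->
  exists w, a <= w <= b /\ m * Rabs (c j) <= Rabs (resp N c w).
Proof.
  intros Hab. destruct (faces_pos N a b Hab (S N) (le_n _)) as [m [Hm Hf]].
  exists m. split; auto. intros c j Hj.
  destruct (argmax c N) as [jm [Hjm Hmax]].
  set (M := Rabs (c jm)). pose proof (Hmax j Hj) as Hcj. fold M in Hcj.
  destruct (Rle_lt_dec M 0) as [HM0|HMpos].
  - exists a. split. lra. pose proof (Rabs_pos (c j)). pose proof (Rabs_pos (resp N c a)). nra.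
  - set (u := fun i => c i / M). set (s := c jm / M).
    assert (Hs : s = 1 \/ s = -1).
    { assert (Hnz : c jm <> 0) by (intro Z; unfold M in HMpos; rewrite Z, Rabs_R0 in HMpos; lra).
      unfold s, M. destruct (Rcase_abs (c jm)).
      - rewrite Rabs_left by lra. right. field. lra.
      - rewrite Rabs_right by lra. left. field. lra. }
    assert (Hbox : inbox (S N) (flo jm s) (fhi jm s) u).
    { intros i Hi. unfold flo, fhi, u. destruct (Nat.eq_dec i jm).
      - subst; unfold s; lra.
      - specialize (Hmax i ltac:(lia)). fold M in Hmax. apply Rabs_le_inv in Hmax.
        assert (E : c i / M * M = c i) by (field; lra). nra. }
    specialize (Hf jm s u ltac:(lia) Hs Hbox).
    destruct (G_spec N a b u ltac:(lra)) as [[w [Hw Ew]] _].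
    exists w. split; auto. rewrite Rmult_1_l, Rplus_0_r in Ew.
    assert (E : resp N c w = M * resp N u w).
    { rewrite <- resp_scale. apply resp_ext. intros n _. unfold u. field. lra. }
    rewrite E, Rabs_mult, (Rabs_right M) by lra. rewrite Ew.
    pose proof (Rabs_pos (c j)). nra.
Qed.

Lemma E_spec N LP LS K c : valid_band LP -> valid_band LS ->
  (forall w, inBand LP w -> ~ inBand LS w) ->
  ismax (band LP LS) (werr N LP K c) (Emax N LP LS K c).
Proof. intros. unfold Emax. apply epsilon_spec. apply max_exists; auto. Qed.

Lemma werr_nonneg N LP K c w : 0 <= werr N LP K c w.
Proof. apply Rabs_pos. Qed.

Lemma stop_interval LS : valid_band LS -> exists a b, 0 <= a < b /\
  forall w, a <= w <= b -> inBand LS w.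
Proof.
  intros [Hn Hv]. destruct LS as [|q LS']; [congruence|].
  destruct (Hv q (in_eq _ _)) as [H1 [H2 H3]].
  exists (fst q), (snd q). split. lra. intros w Hw. exists q. split; auto. apply in_eq.
Qed.

Lemma Emin N LP LS K : valid_band LP -> valid_band LS ->
  (forall w, inBand LP w -> ~ inBand LS w) -> 0 < K ->
  exists cs, forall c, Emax N LP LS K cs <= Emax N LP LS K c.
Proof.
  intros HP HS Hd HK.
  pose proof (fun c => E_spec N LP LS K c HP HS Hd) as Es.
  destruct (stop_interval LS HS) as [a [b [Hab Hin]]].
  destruct (coercive N a b ltac:(lra)) as [m [Hm Hco]].
  set (E0 := Emax N LP LS K (fun _ => 0)).
  assert (HE0 : 0 <= E0).
  { destruct (Es (fun _ => 0)) as [[w [_ Ew]] _]. fold E0 in Ew. rewrite <- Ew. apply werr_nonneg. }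
  set (R0 := E0 / (K * m) + 1).
  assert (HR0 : 1 <= R0).
  { unfold R0. assert (0 <= E0 / (K*m)) by (apply Rmult_le_pos; auto; left; apply Rinv_0_lt_compat; nra). lra. }
  destruct (box_min (S N) (Emax N LP LS K) (1 + Rabs K) (fun _ => -R0) (fun _ => R0)) as [cs [Hcs Hmin]].
  { pose proof (Rabs_pos K); lra. } { intros; lra. }
  { apply (max_lip (band LP LS) (werr N LP K)); auto. intros; apply werr_lip. }
  exists cs. intros c.
  destruct (classic (inbox (S N) (fun _ => -R0) (fun _ => R0) c)) as [Hc|Hc]; [auto|].
  assert (Hz : Emax N LP LS K cs <= E0).
  { apply Hmin. intros i _; lra. }
  apply not_all_ex_not in Hc. destruct Hc as [j Hj].
  assert (Hj1 : (j < S N)%nat /\ ~ (-R0 <= c j <= R0)).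
  { split. destruct (Nat.lt_ge_cases j (S N)); auto. exfalso; apply Hj; intros; lia.
    intro X; apply Hj; auto. }
  destruct Hj1 as [Hjl Hjn].
  assert (HcR : R0 < Rabs (c j)).
  { destruct (Rlt_le_dec R0 (Rabs (c j))); auto. exfalso. apply Hjn. apply Rabs_le_inv; auto. }
  destruct (Hco c j ltac:(lia)) as [w [Hw Hmw]].
  assert (HnP : ~ inBand LP w) by (intro X; exact (Hd w X (Hin w Hw))).
  destruct (Es c) as [_ Hup]. specialize (Hup w (or_intror (Hin w Hw))).
  rewrite werr_nP in Hup by auto. rewrite Rplus_0_r, Rabs_mult, (Rabs_right K) in Hup by lra.
  assert (K * m * R0 = E0 + K * m) by (unfold R0; field; lra).
  assert (K * (m * Rabs (c j)) <= K * Rabs (resp N c w)) by (apply Rmult_le_compat_l; lra).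
  assert (K * m * R0 < K * m * Rabs (c j)) by (apply Rmult_lt_compat_l; nra).
  nra.
Qed.

Theorem mainTheorem2 (N : nat) (LP LS : list (R * R)) :
  (1 <= N)%nat ->
  valid_band LP -> valid_band LS ->
  (forall w, inBand LP w -> ~ inBand LS w) ->
  forall K1 K2 : R, 0 < K1 -> K1 < K2 ->
  exists d1 d2 : R,
    is_Delta N LP LS K1 d1 /\ is_Delta N LP LS K2 d2 /\ d1 < d2.
Proof.
  intros HN HP HS Hd K1 K2 HK1 HK12.
  assert (Delta : forall K, 0 < K -> exists cs, is_Delta N LP LS K (Emax N LP LS K cs) /\
             forall c, Emax N LP LS K cs <= Emax N LP LS K c).
  { intros K HK. destruct (Emin N LP LS K HP HS Hd HK) as [cs Hcs].
    exists cs. split; auto. split.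
    - exists cs. apply E_spec; auto.
    - intros c e He. rewrite (ismax_uniq _ _ _ _ He (E_spec N LP LS K c HP HS Hd)). auto. }
  destruct (Delta K1 HK1) as [c1 [HD1 Hm1]].
  destruct (Delta K2 ltac:(lra)) as [c2 [HD2 Hm2]].
  exists (Emax N LP LS K1 c1), (Emax N LP LS K2 c2). split; auto. split; auto.
  set (d2 := Emax N LP LS K2 c2).
  destruct (E_spec N LP LS K2 c2 HP HS Hd) as [_ Hup2]. fold d2 in Hup2.
  assert (Hd2 : 0 < d2).
  { destruct (Rlt_le_dec 0 d2) as [|Hle]; auto. exfalso.
    destruct (stop_interval LS HS) as [a [b [Hab Hin]]].
    assert (Hz : forall w, a < w < b -> resp N c2 w = 0).
    { intros w Hw. assert (HnP : ~ inBand LP w) by (intro X; exact (Hd w X (Hin w ltac:(lra)))).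
      specialize (Hup2 w (or_intror (Hin w ltac:(lra)))).
      rewrite werr_nP in Hup2 by auto. rewrite Rplus_0_r, Rabs_mult, (Rabs_right K2) in Hup2 by lra.
      pose proof (Rabs_pos (resp N c2 w)).
      assert (Rabs (resp N c2 w) = 0) by nra.
      destruct (Rcase_abs (resp N c2 w)); [rewrite Rabs_left in H0 by lra|rewrite Rabs_right in H0 by lra]; lra. }
    pose proof (indep N c2 a b ltac:(lra) Hz) as Hc2.
    destruct HP as [HPn HPv]. destruct LP as [|p LP']; [congruence|].
    destruct (HPv p (in_eq _ _)) as [Hp1 [Hp2 Hp3]].
    assert (Hpb : inBand (p :: LP') (fst p)) by (exists p; split; [apply in_eq|lra]).
    specialize (Hup2 (fst p) (or_introl Hpb)). rewrite werr_P, resp_zero in Hup2 by auto.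
    rewrite Rabs_left in Hup2 by lra. lra. }
  set (q := d2 * (K2 - K1) / (2 * K1 * K2)).
  assert (Hq : 0 < q) by (unfold q; apply Rdiv_lt_0_compat; nra).
  set (t := Rmin (1/2) q).
  assert (Ht : 0 < t <= 1/2) by (unfold t; split; [apply Rmin_pos; lra|apply Rmin_l]).
  assert (Htq : t <= q) by apply Rmin_r.
  set (ct := fun n => (1 - t) * c2 n + t * (if Nat.eq_dec n 0 then 1 else 0)).
  enough (Emax N LP LS K1 ct < d2) by (specialize (Hm1 ct); lra).
  destruct (E_spec N LP LS K1 ct HP HS Hd) as [[w [Hw Ew]] _]. rewrite <- Ew.
  assert (Er : resp N ct w = (1 - t) * resp N c2 w + t) by (unfold ct; rewrite resp_lin, resp_delta; ring).
  specialize (Hup2 w Hw).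
  destruct (classic (inBand LP w)) as [HwP|HwP].
  - rewrite werr_P in Hup2 |- * by auto. rewrite Er.
    replace (1 * ((1 - t) * resp N c2 w + t) + -1) with ((1 - t) * (1 * resp N c2 w + -1)) by ring.
    rewrite Rabs_mult, (Rabs_right (1-t)) by lra. nra.
  - rewrite werr_nP in Hup2 |- * by auto. rewrite Er.
    rewrite Rplus_0_r, Rabs_mult, (Rabs_right K2) in Hup2 by lra.
    rewrite Rplus_0_r, Rabs_mult, (Rabs_right K1) by lra.
    eapply Rle_lt_trans. apply Rmult_le_compat_l. lra. apply Rabs_triang.
    rewrite Rabs_mult, (Rabs_right (1-t)), (Rabs_right t) by lra.
    assert (Hr : Rabs (resp N c2 w) <= d2 / K2).
    { apply Rmult_le_reg_l with K2. lra. replace (K2 * (d2 / K2)) with d2 by (field; lra). lra. }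
    assert (Hkq : K1 * q = d2 * (K2 - K1) / (2 * K2)) by (unfold q; field; lra).
    assert (HK1t : K1 * t <= d2 * (K2 - K1) / (2 * K2)) by (rewrite <- Hkq; apply Rmult_le_compat_l; lra).
    assert (H1 : K1 * ((1 - t) * Rabs (resp N c2 w)) <= K1 * (d2 / K2)).
    { apply Rmult_le_compat_l. lra. pose proof (Rabs_pos (resp N c2 w)).
      assert (d2 / K2 >= 0) by (apply Rle_ge, Rdiv_le_0_compat; lra). nra. }
    assert (E1 : K1 * (d2 / K2) + d2 * (K2 - K1) / (2 * K2) = d2 - d2 * (K2 - K1) / (2 * K2))
      by (field; lra).
    assert (0 < d2 * (K2 - K1) / (2 * K2)) by (apply Rdiv_lt_0_compat; nra).
    lra.
Qed.
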